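(* Fix a block $i\in\{1,\dots,N\}$, a battery state $\epsilon$ and a G-channel state $\gamma_G$. If $\gamma_H^-\le\gamma_H^+$ are H-channel states and the action $\alpha=1$ is optimal in block $i$ at state $\langle\epsilon,\gamma_G,\gamma_H^-\rangle$, then $\alpha=1$ is optimal in block $i$ at state $\langle\epsilon,\gamma_G,\gamma_H^+\rangle$. Equivalently, the optimal policy is monotone in $\gamma_H$: there is a threshold $\Gamma_{H,i}(\epsilon,\gamma_G)$ such that the EH-BS is assigned ($\alpha=1$) only when $\gamma_H\ge\Gamma_{H,i}(\epsilon,\gamma_G)$.
   Context: Finite-horizon MDP with $N$ blocks of length $\tau>0$. Parameters: $B_m>0$, positive integers $M,K$; channel levels $0<H_1<\dots<H_K$; $R,W,\sigma^2,g_0,\theta,d_G,d_H>0$; $p_G^{\max},p_H^{\max}>0$; weights $w_G,w_D>0$; $E_{H}$ a random variable with density $f_{E_H}$ on $[0,E_m]$. A state is $s=\langle\epsilon,\gamma_G,\gamma_H\rangle$ with $\epsilon\in\{(2m-1)B_m/(2M): m=1,\dots,M\}$ and $\gamma_G,\gamma_H\in\{H_1,\dots,H_K\}$. Let $p^{inv}_j(s)=(2^{R/(W\tau)}-1)\sigma^2(g_0 d_j^{-\theta}\gamma_j)^{-1}$ for $j\in\{G,H\}$, $\kappa=\min\{p_G^{\max},w_D(w_G\tau)^{-1}\}$, and $c(s)=w_D$ if $p^{inv}_G(s)>\kappa$, $c(s)=w_G p^{inv}_G(s)\tau$ otherwise. The allowable actions are $\mathcal{A}_s=\{0\}$ if $p^{inv}_H(s)>\min\{\epsilon/\tau,p_H^{\max}\}$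 and $\mathcal{A}_s=\{0,1\}$ otherwise; the cost is $c(s,\alpha)=(1-\alpha)c(s)$. Transitions: given $s$ and $\alpha$, the next channel states $\gamma_G',\gamma_H'$ are independent, each uniform on $\{H_1,\dots,H_K\}$, independent of the next energy state $\epsilon'=Q(\epsilon-\alpha p^{inv}_H(s)\tau+E_H)$, where $Q(\varepsilon)=\big(2\min\{\lfloor M\min\{\varepsilon,B_m\}/B_m\rfloor+1,M\}-1\big)B_m/(2M)$; denote the resulting transition probability $p(s'|s,\alpha)$. Optimal cost-to-go functions: $u_N^*(s)=\min_{\alpha\in\mathcal{A}_s}c(s,\alpha)$ and, for $i<N$, $u_i^*(s)=\min_{\alpha\in\mathcal{A}_s}\{c(s,\alpha)+\sum_{s'}p(s'|s,\alpha)u_{i+1}^*(s')\}$. Action $\alpha$ is optimal in block $i$ at state $s$ if $\alpha\in\mathcal{A}_s$ and it attains the minimum in the defining equation of $u_i^*(s)$. *)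

(* Defs.v *)
From HB Require Import structures.
From mathcomp Require Import all_boot all_order all_algebra.
From mathcomp Require Import all_classical all_reals all_analysis.
Set Implicit Arguments. Unset Strict Implicit. Unset Printing Implicit Defensive.
Import Order.TTheory GRing.Theory Num.Theory.
Local Open Scope ring_scope.
Local Open Scope classical_set_scope.

Record mdp (R : realType) := Mdp {
  N : nat;            (* number of blocks *)
  tau : R;            (* block length *)
  Bm : R;             (* battery capacity *)
  M : nat;            (* number of battery levels *)
  K : nat;            (* number of channel levels *)
  Hlev : 'I_K -> R;   (* channel levels H_1 < ... < H_K *)
  Rr : R; W : R; sigma2 : R; g0 : R; theta : R; dG : R; dH : R;
  pGmax : R; pHmax : R; wG : R; wD : R;
  Em : R;             (* E_H takes values in [0, Em] *)
  fEH : R -> R        (* density of E_H *)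
}.

Section MDP.
Variables (R : realType) (P : mdp R).

(* state <eps, gamma_G, gamma_H>, encoded by indices (0-based):
   eps = (2m+1) Bm / (2M), gamma_G = Hlev g, gamma_H = Hlev h *)
Definition state : finType := ('I_(M P) * 'I_(K P) * 'I_(K P))%type.

Definition eps_lev (m : nat) : R := (2 * m%:R + 1) * Bm P / (2 * (M P)%:R).
Definition eps_of (s : state) : R := eps_lev s.1.1.
Definition gG_of (s : state) : R := Hlev s.1.2.
Definition gH_of (s : state) : R := Hlev s.2.

Definition pinv (d gamma : R) : R :=
  (2 `^ (Rr P / (W P * tau P)) - 1) * sigma2 P / (g0 P * d `^ (- theta P) * gamma).
Definition pinvG (s : state) : R := pinv (dG P) (gG_of s).
Definition pinvH (s : state) : R := pinv (dH P) (gH_of s).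

Definition kappa : R := Num.min (pGmax P) (wD P / (wG P * tau P)).

Definition cost0 (s : state) : R :=
  if pinvG s > kappa then wD P else wG P * pinvG s * tau P.

(* actions: false = 0, true = 1 *)
Definition allowed (s : state) (a : bool) : bool :=
  ~~ a || (pinvH s <= Num.min (eps_of s / tau P) (pHmax P)).

Definition cost (s : state) (a : bool) : R := (1 - (a : nat)%:R) * cost0 s.

Definition Qz (e : R) : R :=
  let q : int := Num.min (Num.floor ((M P)%:R * Num.min e (Bm P) / Bm P) + 1)
                         ((M P)%:Z) in
  (2 * q - 1)%:~R * Bm P / (2 * (M P)%:R).

Definition probEH (A : set R) : R :=
  fine (\int[@lebesgue_measure R]_(x in A) (fEH P x)%:E)%E.

Definition next_energy (s : state) (a : bool) (e : R) : R :=
  Qz (eps_of s - (a : nat)%:R * pinvH s * tau P + e).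

Definition trans (s : state) (a : bool) (s' : state) : R :=
  ((K P)%:R^-1) * ((K P)%:R^-1) *
  probEH [set e | next_energy s a e = eps_of s'].

(* Backward recursion indexed by n = N - i (number of blocks after block i).
   qval n s a is the quantity minimized in the equation defining u_i^*(s). *)
Fixpoint ustar_rem (n : nat) (s : state) : R :=
  let q := fun a : bool =>
    match n with
    | 0 => cost s a
    | n'.+1 => cost s a + \sum_(s' : state) trans s a s' * ustar_rem n' s'
    end in
  if allowed s true then Num.min (q false) (q true) else q false.

Definition qval (n : nat) (s : state) (a : bool) : R :=
  match n with
  | 0 => cost s a
  | n'.+1 => cost s a + \sum_(s' : state) trans s a s' * ustar_rem n' s'
  end.

Definition ustar (i : nat) (s : state) : R := ustar_rem (N P - i) s.

Definition optimal (i : nat) (s : state) (a : bool) : Prop :=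
  allowed s a /\
  qval (N P - i) s a = ustar i s.

End MDP.

Definition supp_int (R : realType) (Em : R) : set R := `[0%R, Em].

(* Main.v *)
Require Import Defs.
From HB Require Import structures.
From mathcomp Require Import all_boot all_order all_algebra.
From mathcomp Require Import all_classical all_reals all_analysis.
From mathcomp Require Import measurable_realfun.
From mathcomp Require Import zify lra.
Import Order.TTheory GRing.Theory Num.Theory.
Local Open Scope ring_scope.
Local Open Scope classical_set_scope.

Section S.
Variables (R : realType) (P : mdp R).
Hypotheses (hBm : 0 < Bm P) (hM : (0 < M P)%N).

Lemma eps_lev_le (a b : nat) : (eps_lev P a <= eps_lev P b) = (a <= b)%N.
Proof.
rewrite /eps_lev ler_pM2r; last by rewrite invr_gt0 mulr_gt0 // ltr0n.
by rewrite ler_pM2r // lerD2r ler_pM2l // ler_nat.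
Qed.

Lemma eps_lev_inj (a b : nat) : eps_lev P a = eps_lev P b -> a = b.
Proof.
move=> e; apply/eqP; rewrite eqn_leq -!eps_lev_le e; by rewrite !lexx.
Qed.

Lemma Qz_le z1 z2 : z1 <= z2 -> Qz P z1 <= Qz P z2.
Proof.
move=> z12; rewrite /Qz /=; apply: ler_wpM2r.
  by rewrite invr_ge0 mulr_ge0 // ler0n.
apply: ler_wpM2r; first exact: ltW.
rewrite ler_int.
have : Num.floor ((M P)%:R * Num.min z1 (Bm P) / Bm P) <=
       Num.floor ((M P)%:R * Num.min z2 (Bm P) / Bm P).
  apply: le_floor; apply: ler_wpM2r; first by rewrite invr_ge0 ltW.
  apply: ler_wpM2l; first exact: ler0n.
  exact: le_min2.
set a := Num.floor _; set b := Num.floor _ => ab.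
have : Num.min (a + 1) (M P)%:Z <= Num.min (b + 1) (M P)%:Z.
  by apply: le_min2 => //; rewrite lerD2r.
set u := Num.min _ _; set v := Num.min _ _ => uv.
lia.
Qed.

Lemma Qz_lev z : 0 <= z -> exists j : 'I_(M P), Qz P z = eps_lev P j.
Proof.
move=> z0; rewrite /Qz /=.
have f0 : 0 <= Num.floor ((M P)%:R * Num.min z (Bm P) / Bm P).
  rewrite floor_ge0; apply: mulr_ge0; last by rewrite invr_ge0 ltW.
  by apply: mulr_ge0; [exact: ler0n| rewrite le_min z0 ltW].
set a := Num.floor _ in f0 *.
set q := Num.min (a + 1) (M P)%:Z.
have q1 : 1 <= q by rewrite le_min lerDr f0 /=; lia.
have qM : q <= (M P)%:Z by rewrite ge_min lexx orbT.
have jM : (`|q - 1|%N < M P)%N by lia.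
exists (Ordinal jM); rewrite /eps_lev /=.
have -> : 2 * q - 1 = (2 * `|q - 1|%N + 1)%N%:Z by lia.
by rewrite -pmulrn natrD natrM.
Qed.


Hypotheses (hEm : 0 < Em P)
  (hfmeas : measurable_fun setT (fEH P))
  (hfpos : forall x, 0 <= fEH P x)
  (hfsupp : forall x, ~ (0 <= x <= Em P) -> fEH P x = 0)
  (hfint : (\int[@lebesgue_measure R]_(x in supp_int (Em P)) (fEH P x)%:E = 1)%E).

Definition Aset z (j : nat) := [set e : R | Qz P (z + e) = eps_lev P j].

Lemma Aset_meas z j : measurable (Aset z j).
Proof.
have mf : measurable_fun setT (fun e => Qz P (z + e)).
  apply: nondecreasing_measurable => // a b ab; apply: Qz_le.
  by rewrite lerD2l.
have := mf measurableT [set eps_lev P j] (measurable_set1 _).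
by rewrite setTI.
Qed.

Let mu := @lebesgue_measure R.

Lemma mF : measurable_fun setT (fun e => (fEH P e)%:E).
Proof. exact/measurable_EFinP. Qed.

Lemma int_le1 (A : set R) : measurable A ->
  (0 <= \int[mu]_(e in A) (fEH P e)%:E <= 1)%E.
Proof.
move=> mA; apply/andP; split.
  by apply: integral_ge0 => e _; rewrite lee_fin.
apply: (@le_trans _ _ (\int[mu]_(e in setT) (fEH P e)%:E)%E).
  apply: ge0_subset_integral => //; first exact: mF.
  by move=> e _; rewrite lee_fin.
suff -> : (\int[mu]_(e in setT) (fEH P e)%:E)%E =
    (\int[mu]_(e in supp_int (Em P)) (fEH P e)%:E)%E by rewrite hfint.
rewrite [RHS]integral_mkcond; apply: eq_integral => e _.
rewrite /patch; case: ifP => // /negbT/negP he.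
rewrite hfsupp //; move=> he'; apply: he; rewrite /supp_int.
by rewrite in_setE /= in_itv.
Qed.

Lemma int_fin (A : set R) : measurable A ->
  (\int[mu]_(e in A) (fEH P e)%:E)%E \is a fin_num.
Proof.
move=> mA; have /andP[h0 h1] := int_le1 A mA.
by rewrite ge0_fin_numE // (le_lt_trans h1) // ltry.
Qed.


Lemma pointwise x y (phi : 'I_(M P) -> R) e : 0 <= x -> x <= y ->
  (forall j, 0 <= phi j) ->
  (forall j k : 'I_(M P), (j <= k)%N -> phi k <= phi j) ->
  \sum_j fEH P e * phi j * \1_(Aset y j) e <=
  \sum_j fEH P e * phi j * \1_(Aset x j) e.
Proof.
move=> x0 xy phi0 phim.
case: (boolP (0 <= e <= Em P)) => [/andP[e0 _]|/negP he]; last first.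
  by rewrite !big1 // => j _; rewrite hfsupp // !mul0r.
have S z : 0 <= z -> exists jz : 'I_(M P),
    Qz P (z + e) = eps_lev P jz /\
    \sum_j fEH P e * phi j * \1_(Aset z j) e = fEH P e * phi jz.
  move=> z0; have [jz hjz] := Qz_lev (z + e) (addr_ge0 z0 e0).
  exists jz; split => //.
  rewrite (bigD1 jz) //= big1 ?addr0; last first.
    move=> j /eqP hj; rewrite indicE memNset ?mulr0 //.
    rewrite /Aset /= hjz => /eps_lev_inj h; apply: hj; exact: val_inj.
  by rewrite indicE mem_set ?mulr1.
have [jx [hx ->]] := S x x0.
have [jy [hy ->]] := S y (le_trans x0 xy).
apply: ler_wpM2l => //; apply: phim.
by rewrite -eps_lev_le -hx -hy Qz_le // lerD2r.
Qed.

Lemma mh z (phi : 'I_(M P) -> R) j : measurable_fun setT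
    (fun e => (fEH P e * phi j * \1_(Aset z j) e)%:E).
Proof.
apply/measurable_EFinP; apply: measurable_funM.
  by apply: measurable_funM => //; exact: measurable_cst.
exact: measurable_indic (Aset_meas z j).
Qed.

Lemma Iform z (phi : 'I_(M P) -> R) (j : 'I_(M P)) : 0 <= phi j ->
  (\int[mu]_(e in Aset z j) (fEH P e)%:E * (phi j)%:E)%E =
  (\int[mu]_e (fEH P e * phi j * \1_(Aset z j) e)%:E)%E.
Proof.
move=> phi0.
rewrite -ge0_integralZr //.
all: try exact: Aset_meas.
all: try (by move=> e _; rewrite lee_fin).
all: try (by apply: measurable_funS mF).
all: try (by rewrite lee_fin).
rewrite -[in LHS](setTI (Aset z j)) integral_mkcondr epatch_indic.
by apply: eq_integral => e _ /=; rewrite !EFinM.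
Qed.

Lemma sum_prob_int z (phi : 'I_(M P) -> R) : (forall j, 0 <= phi j) ->
  \sum_(j : 'I_(M P)) probEH P (Aset z j) * phi j =
  fine (\int[mu]_e (\sum_(j : 'I_(M P)) (fEH P e * phi j * \1_(Aset z j) e)%:E))%E.
Proof.
move=> phi0.
rewrite ge0_integral_sum.
2: exact: measurableT.
2: by move=> n; exact: (mh z phi n).
2: by move=> n e _; rewrite lee_fin !mulr_ge0.
rewrite -sum_fine; last first.
  move=> j _; rewrite -Iform //; apply: fin_numM => //.
  by apply: int_fin; exact: Aset_meas.
apply: eq_bigr => j _; rewrite -Iform // fineM //.
by apply: int_fin; exact: Aset_meas.
Qed.

Lemma int_sum_fin z (phi : 'I_(M P) -> R) : (forall j, 0 <= phi j) ->
  (\int[mu]_e (\sum_(j : 'I_(M P)) (fEH P e * phi j * \1_(Aset z j) e)%:E))%E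
    \is a fin_num.
Proof.
move=> phi0.
rewrite ge0_integral_sum.
2: exact: measurableT.
2: by move=> n; exact: (mh z phi n).
2: by move=> n e _; rewrite lee_fin !mulr_ge0.
apply/sum_fin_numP => j _ _.
rewrite -Iform //; apply: fin_numM => //.
by apply: int_fin; exact: Aset_meas.
Qed.

Lemma key x y (phi : 'I_(M P) -> R) : 0 <= x -> x <= y ->
  (forall j, 0 <= phi j) ->
  (forall j k : 'I_(M P), (j <= k)%N -> phi k <= phi j) ->
  \sum_(j : 'I_(M P)) probEH P (Aset y j) * phi j <=
  \sum_(j : 'I_(M P)) probEH P (Aset x j) * phi j.
Proof.
move=> x0 xy phi0 phim.
rewrite [X in X <= _](sum_prob_int y phi phi0) [X in _ <= X](sum_prob_int x phi phi0).
apply: fine_le; [exact: int_sum_fin y phi phi0 | exact: int_sum_fin x phi phi0 |].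
apply: ge0_le_integral.
- exact: measurableT.
- by move=> e _; apply: sume_ge0 => j _; rewrite lee_fin !mulr_ge0.
- by apply: emeasurable_sum => j; exact: (mh y phi j).
- by apply: emeasurable_sum => j; exact: (mh x phi j).
move=> e _; rewrite !sumEFin lee_fin.
exact: (pointwise x y phi e x0 xy phi0 phim).
Qed.


Hypotheses (htau : 0 < tau P) (hK : (0 < K P)%N)
  (hRr : 0 < Rr P) (hW : 0 < W P) (hsig : 0 < sigma2 P) (hg0 : 0 < g0 P)
  (hdG : 0 < dG P) (hdH : 0 < dH P) (hwG : 0 < wG P) (hwD : 0 < wD P).

Lemma pinv_ge0 d gam : 0 < d -> 0 < gam -> 0 <= Defs.pinv P d gam.
Proof.
move=> d0 g0'; rewrite /Defs.pinv; apply: mulr_ge0; last first.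
  by rewrite invr_ge0 ltW // !mulr_gt0 // powR_gt0.
apply: mulr_ge0; last exact: ltW.
rewrite subr_ge0 -{1}(powRr0 2); apply: ler_powR; first by rewrite ler1n.
by rewrite ltW // divr_gt0 // mulr_gt0.
Qed.

Lemma pinv_le d g1 g2 : 0 < d -> 0 < g1 -> g1 <= g2 -> Defs.pinv P d g2 <= Defs.pinv P d g1.
Proof.
move=> d0 g10 g12; rewrite /Defs.pinv; apply: ler_wpM2l.
  apply: mulr_ge0; last exact: ltW.
  rewrite subr_ge0 -{1}(powRr0 2); apply: ler_powR; first by rewrite ler1n.
  by rewrite ltW // divr_gt0 // mulr_gt0.
have c0 : 0 < g0 P * d `^ (- theta P) by rewrite mulr_gt0 // powR_gt0.
have g20 : 0 < g2 := lt_le_trans g10 g12.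
rewrite lef_pV2 ?posrE; first by rewrite ler_pM2l.
  exact: mulr_gt0.
exact: mulr_gt0.
Qed.

Hypothesis hHpos : forall j : 'I_(K P), 0 < Hlev j.

Lemma cost0_ge0 (s : state P) : 0 <= cost0 s.
Proof.
rewrite /cost0; case: ifP => _; first exact: ltW.
apply: mulr_ge0; last exact: ltW.
apply: mulr_ge0; first exact: ltW.
by rewrite /pinvG; apply: pinv_ge0 => //; exact: hHpos.
Qed.

Lemma cost_false (s : state P) : cost s false = cost0 s.
Proof. by rewrite /cost /= subr0 mul1r. Qed.

Lemma cost_true (s : state P) : cost s true = 0.
Proof. by rewrite /cost /= subrr mul0r. Qed.

Lemma cost_ge0 (s : state P) a : 0 <= cost s a.
Proof. by case: a; rewrite ?cost_true ?cost_false ?cost0_ge0. Qed.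

Lemma probEH_ge0 (A : set R) : 0 <= probEH P A.
Proof. by apply: fine_ge0; apply: integral_ge0 => e _; rewrite lee_fin. Qed.

Lemma trans_E (s : state P) a (s' : state P) : trans s a s' =
  (K P)%:R^-1 * (K P)%:R^-1 *
  probEH P (Aset (eps_of s - (a : nat)%:R * pinvH s * tau P) s'.1.1).
Proof. by []. Qed.

Local Opaque trans probEH.

Lemma trans_ge0 (s : state P) a s' : 0 <= trans s a s'.
Proof.
rewrite trans_E; apply: mulr_ge0; last exact: probEH_ge0.
by apply: mulr_ge0; rewrite invr_ge0 ler0n.
Qed.

Lemma ustar_remE n (s : state P) : ustar_rem n s =
  if allowed s true then Num.min (qval n s false) (qval n s true)
  else qval n s false.
Proof. by case: n. Qed.

Lemma min_ge0 (x y : R) : 0 <= x -> 0 <= y -> 0 <= Num.min x y.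
Proof. by move=> hx hy; rewrite le_min hx hy. Qed.

Lemma qval0 (s : state P) a : qval 0 s a = cost s a.
Proof. by []. Qed.

Lemma qvalS n (s : state P) a : qval n.+1 s a =
  cost s a + \sum_(s' : state P) trans s a s' * ustar_rem n s'.
Proof. by []. Qed.

Local Opaque qval ustar_rem.

Lemma ustar_ge0 n (s : state P) : 0 <= ustar_rem n s.
Proof.
elim: n s => [|n IH] s; rewrite ustar_remE.
  by case: ifP => _; rewrite !qval0; [apply: min_ge0; exact: cost_ge0 | exact: cost_ge0].
have q0 a : 0 <= qval n.+1 s a.
  rewrite qvalS; apply: addr_ge0; first exact: cost_ge0.
  by apply: sumr_ge0 => s' _; apply: mulr_ge0; [exact: trans_ge0|exact: IH].
by case: ifP => _; [apply: min_ge0; exact: q0 | exact: q0].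
Qed.

Lemma sum_state (F : state P -> R) :
  \sum_(s : state P) F s =
  \sum_(m : 'I_(M P)) \sum_(g : 'I_(K P)) \sum_(h : 'I_(K P)) F (m, g, h).
Proof.
rewrite pair_big /= pair_big /=.
by apply: eq_big => // -[[m g] h].
Qed.

Definition phiu (u : state P -> R) (m : 'I_(M P)) : R :=
  (K P)%:R^-1 * (K P)%:R^-1 *
  \sum_(g : 'I_(K P)) \sum_(h : 'I_(K P)) u (m, g, h).

Lemma trans_sum (s : state P) a (u : state P -> R) :
  \sum_(s' : state P) trans s a s' * u s' =
  \sum_(m : 'I_(M P))
    probEH P (Aset (eps_of s - (a : nat)%:R * pinvH s * tau P) m) * phiu u m.
Proof.
rewrite sum_state; apply: eq_bigr => m _.
rewrite /phiu mulr_sumr mulr_sumr; apply: eq_bigr => g _.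
rewrite mulr_sumr mulr_sumr; apply: eq_bigr => h _.
rewrite trans_E /=.
set p := probEH _ _; set c := _ * _.
by rewrite mulrCA mulrA.
Qed.

Lemma sum_cmp (s1 s2 : state P) (a : bool) (u : state P -> R) :
  (forall m, 0 <= phiu u m) ->
  (forall j k : 'I_(M P), (j <= k)%N -> phiu u k <= phiu u j) ->
  0 <= eps_of s1 - (a : nat)%:R * pinvH s1 * tau P ->
  eps_of s1 - (a : nat)%:R * pinvH s1 * tau P <=
    eps_of s2 - (a : nat)%:R * pinvH s2 * tau P ->
  \sum_(s' : state P) trans s2 a s' * u s' <=
  \sum_(s' : state P) trans s1 a s' * u s'.
Proof.
move=> h0 hm x0 xy.
rewrite [X in X <= _]trans_sum [X in _ <= X]trans_sum.
exact: (key _ _ (phiu u) x0 xy h0 hm).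
Qed.

Lemma phiu_ge0 n m : 0 <= phiu (ustar_rem n) m.
Proof.
rewrite /phiu; apply: mulr_ge0.
  by apply: mulr_ge0; rewrite invr_ge0 ler0n.
apply: sumr_ge0 => g _; apply: sumr_ge0 => h _; exact: ustar_ge0.
Qed.

Lemma phiu_mono (u : state P -> R) :
  (forall (m1 m2 : 'I_(M P)) g h, (m1 <= m2)%N -> u (m2, g, h) <= u (m1, g, h)) ->
  forall j k : 'I_(M P), (j <= k)%N -> phiu u k <= phiu u j.
Proof.
move=> hu j k jk; rewrite /phiu; apply: ler_wpM2l.
  by apply: mulr_ge0; rewrite invr_ge0 ler0n.
apply: ler_sum => g _; apply: ler_sum => h _; exact: hu.
Qed.

Lemma cost_eq (m1 m2 : 'I_(M P)) g h1 h2 a :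
  cost (m1, g, h1) a = cost (m2, g, h2) a.
Proof. by rewrite /cost /cost0 /pinvG /gG_of /=. Qed.

Lemma pinvH_eq (m1 m2 : 'I_(M P)) g1 g2 h :
  pinvH (m1, g1, h) = pinvH (m2, g2, h).
Proof. by rewrite /pinvH /gH_of /=. Qed.

Lemma eps_of_eq (m : 'I_(M P)) g1 g2 h1 h2 :
  eps_of (m, g1, h1) = eps_of (m, g2, h2).
Proof. by rewrite /eps_of /=. Qed.

Lemma eps_of_ge0 (s : state P) : 0 <= eps_of s.
Proof.
rewrite /eps_of /eps_lev; apply: mulr_ge0.
  by apply: mulr_ge0; [rewrite addr_ge0 // mulr_ge0 // ler0n | exact: ltW].
by rewrite invr_ge0 mulr_ge0 // ler0n.
Qed.

Lemma allowed_le (s : state P) : allowed s true -> pinvH s * tau P <= eps_of s.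
Proof.
rewrite /allowed /= le_min => /andP[h _].
by rewrite -ler_pdivlMr.
Qed.

Lemma allowed_mono (m1 m2 : 'I_(M P)) g h : (m1 <= m2)%N ->
  allowed (m1, g, h) true -> allowed (m2, g, h) true.
Proof.
move=> le; rewrite /allowed /= => hal; apply: le_trans hal _.
apply: le_min2 => //.
by apply: ler_wpM2r; [rewrite invr_ge0 ltW | rewrite eps_lev_le].
Qed.

Lemma eps_of_le (m1 m2 : 'I_(M P)) g h : (m1 <= m2)%N ->
  eps_of (m1, g, h) <= eps_of (m2, g, h).
Proof. by move=> le; rewrite /eps_of /= eps_lev_le. Qed.

Lemma pinvH_le (m : 'I_(M P)) g h1 h2 : Hlev h1 <= Hlev h2 ->
  pinvH (m, g, h2) <= pinvH (m, g, h1).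
Proof. by move=> le; rewrite /pinvH /gH_of /=; apply: pinv_le. Qed.

Lemma allowed_H (m : 'I_(M P)) g h1 h2 :
  pinvH (m, g, h2) <= pinvH (m, g, h1) ->
  allowed (m, g, h1) true -> allowed (m, g, h2) true.
Proof.
rewrite /allowed /= (eps_of_eq m g g h1 h2) => hp hal.
exact: le_trans hp hal.
Qed.

Local Opaque cost cost0 pinvG pinvH eps_of allowed gG_of gH_of.

Lemma if_min_le (A1 A2 : bool) (f1 f2 t1 t2 : R) :
  (A1 -> A2) -> f2 <= f1 -> (A1 -> t2 <= t1) ->
  (if A2 then Num.min f2 t2 else f2) <= (if A1 then Num.min f1 t1 else f1).
Proof.
case: A1; case: A2 => //= h hf ht.
- by apply: le_min2 => //; exact: ht.
- by move: (h isT).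
- by rewrite ge_min hf.
Qed.

Lemma x_nonneg (s : state P) (a : bool) : (a -> allowed s true) ->
  0 <= eps_of s - (a : nat)%:R * pinvH s * tau P.
Proof.
case: a => /= h.
  by rewrite mul1r subr_ge0; apply: allowed_le; exact: h.
by rewrite mul0r mul0r subr0; exact: eps_of_ge0.
Qed.

Lemma ustar_mono n : forall (m1 m2 : 'I_(M P)) g h, (m1 <= m2)%N ->
  ustar_rem n (m2, g, h) <= ustar_rem n (m1, g, h).
Proof.
elim: n => [|n IH] m1 m2 g h le.
  rewrite !ustar_remE; apply: if_min_le.
  - exact: allowed_mono.
  - by rewrite !qval0 (cost_eq m2 m1 g h h).
  - by rewrite !qval0 (cost_eq m2 m1 g h h).
have al : allowed (m1, g, h) true -> allowed (m2, g, h) true.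
  exact: allowed_mono.
have qle (a : bool) : (a -> allowed (m1, g, h) true) ->
    qval n.+1 (m2, g, h) a <= qval n.+1 (m1, g, h) a.
  move=> ha; rewrite !qvalS (cost_eq m2 m1 g h h) lerD2l.
  apply: sum_cmp.
  - by move=> m; exact: phiu_ge0.
  - by apply: phiu_mono => m1' m2' g' h'; exact: IH.
  - exact: x_nonneg.
  rewrite (pinvH_eq m2 m1 g g h); apply: lerD => //.
  exact: eps_of_le.
rewrite !ustar_remE; apply: if_min_le.
- exact: al.
- by apply: qle.
- by move=> a1; apply: qle.
Qed.

Lemma qval_false_eq n (m : 'I_(M P)) g h1 h2 :
  qval n (m, g, h1) false = qval n (m, g, h2) false.
Proof.
case: n => [|n]; first by rewrite !qval0 (cost_eq m m g h1 h2).
rewrite [in LHS]qvalS [in RHS]qvalS [in LHS](cost_eq m m g h1 h2).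
rewrite [in LHS]trans_sum [in RHS]trans_sum /=.
by rewrite !mul0r !subr0 (eps_of_eq m g g h1 h2).
Qed.

Lemma qval_true_le n (m : 'I_(M P)) g h1 h2 :
  pinvH (m, g, h2) <= pinvH (m, g, h1) -> allowed (m, g, h1) true ->
  qval n (m, g, h2) true <= qval n (m, g, h1) true.
Proof.
move=> hp hal.
case: n => [|n]; first by rewrite !qval0 !cost_true.
rewrite [X in X <= _]qvalS [X in _ <= X]qvalS [in X in X <= _]cost_true.
rewrite [in X in _ <= X]cost_true [X in X <= _]add0r [X in _ <= X]add0r.
apply: sum_cmp.
- by move=> j; exact: phiu_ge0.
- by apply: phiu_mono => m1' m2' g' h'; exact: ustar_mono.
- exact: x_nonneg.
rewrite (eps_of_eq m g g h1 h2); apply: lerD => //.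
rewrite lerN2 !mul1r; apply: ler_wpM2r => //; exact: ltW.
Qed.

Lemma min_le_l (x y : R) : Num.min x y <= x.
Proof. by rewrite ge_min lexx. Qed.

Lemma min_eq_r (x y : R) : y <= x -> y = Num.min x y.
Proof.
move=> h; apply/eqP; rewrite eq_le le_min h lexx /=.
by rewrite ge_min lexx orbT.
Qed.

Lemma main_sec i (m : 'I_(M P)) (g hm hp : 'I_(K P)) :
  Hlev hm <= Hlev hp -> optimal i (m, g, hm) true -> optimal i (m, g, hp) true.
Proof.
move=> hle [al eq]; move: eq; rewrite /optimal /ustar.
set n := (N P - i)%N => eq.
have pH := pinvH_le m g hm hp hle.
have al2 := allowed_H m g hm hp pH al.
split => //.
rewrite ustar_remE al2.
have tf : qval n (m, g, hm) true <= qval n (m, g, hm) false.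
  by move: eq; rewrite [in RHS]ustar_remE al => ->; exact: min_le_l.
have ef := qval_false_eq n m g hp hm.
have et := qval_true_le n m g hm hp pH al.
apply: min_eq_r; rewrite ef; exact: le_trans et tf.
Qed.

End S.

Theorem proposition3 (R : realType) (P : mdp R)
  (hN : (0 < N P)%N) (htau : 0 < tau P) (hBm : 0 < Bm P)
  (hM : (0 < M P)%N) (hK : (0 < K P)%N)
  (hHpos : forall j : 'I_(K P), 0 < Hlev j)
  (hHinc : forall j k : 'I_(K P), (j < k)%N -> Hlev j < Hlev k)
  (hRr : 0 < Rr P) (hW : 0 < W P) (hsig : 0 < sigma2 P) (hg0 : 0 < g0 P)
  (htheta : 0 < theta P) (hdG : 0 < dG P) (hdH : 0 < dH P)
  (hpG : 0 < pGmax P) (hpH : 0 < pHmax P) (hwG : 0 < wG P) (hwD : 0 < wD P)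
  (hEm : 0 < Em P)
  (hfmeas : measurable_fun setT (fEH P))
  (hfpos : forall x, 0 <= fEH P x)
  (hfsupp : forall x, ~ (0 <= x <= Em P) -> fEH P x = 0)
  (hfint : (\int[@lebesgue_measure R]_(x in supp_int (Em P)) (fEH P x)%:E = 1)%E)
  (i : nat) (hi : (1 <= i <= N P)%N)
  (m : 'I_(M P)) (g hm hp : 'I_(K P))
  (hle : Hlev hm <= Hlev hp) :
  @optimal R P i (m, g, hm) true -> @optimal R P i (m, g, hp) true.
Proof.
move=> hopt.
apply: main_sec; try eassumption.
Qed.
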